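(* Let $n\ge 1$, let $C_u(v_1),\ldots,C_u(v_n)>0$ and $R_1,\ldots,R_n>0$, and run the algorithm described in the context on these inputs. For every $\alpha$ with $1\le\alpha\le n$: if $\sum_{i=1}^n U_i[\alpha] \geq (n-2)R_\alpha$, then $\sum_{i=1}^n r_{\alpha,i} = R_\alpha$ at the end of iteration $\alpha$ of the outer loop.
   Context: Sub-stream rate assigning algorithm. Input: $n$, uplink capacities $C_u(v_1),\ldots,C_u(v_n)$ and rates $R_1,\ldots,R_n$. Initialize $r_{i,j}:=0$ for all $1\le i,j\le n$ and $U_i := C_u(v_i)-R_i$ for $1\le i\le n$. Outer loop: for $i=1$ to $n$: set $R'_i := R_i$; inner loop: for $j=1$ to $n$: if $(n-2)R'_i > U_j$ then set $r_{i,j} := U_j/(n-2)$, else set $r_{i,j} := R'_i$; then set $U_j := U_j-(n-2)r_{i,j}$ and $R'_i := R'_i - r_{i,j}$; if $R'_i = 0$, exit the inner loop. Output all $r_{i,j}$. Notation: $U_i[\alpha]$ denotes the value of the variable $U_i$ at the start of iteration $\alpha$ of the outer loop. *)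

(* Defs.v *)
From mathcomp Require Import all_boot all_order all_algebra.
Set Implicit Arguments. Unset Strict Implicit. Unset Printing Implicit Defensive.
Import Order.TTheory GRing.Theory Num.Theory.
Local Open Scope ring_scope.

Section Algo.
Variables (R : realFieldType) (n : nat).

(* Peers are indexed by 'I_n (peer k : 'I_n is v_{k+1} in the paper). *)

Record alg_state := AlgState { st_U : 'I_n -> R ; st_r : 'I_n -> 'I_n -> R }.

(* The constant (n-2), computed in R (so it is -1 when n = 1). *)
Definition nm2 : R := n%:R - 2.

Record inner_state := InnerState
  { in_U : 'I_n -> R ; in_r : 'I_n -> 'I_n -> R ; in_R' : R ; in_done : bool }.

Definition inner_step (i : 'I_n) (s : inner_state) (j : 'I_n) : inner_state :=
  if in_done s then s else
  let U := in_U s in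
  let R' := in_R' s in
  let rij := if nm2 * R' > U j then U j / nm2 else R' in
  let U' := fun k => if k == j then U j - nm2 * rij else U k in
  let r' := fun a b => if (a == i) && (b == j) then rij else in_r s a b in
  let R'' := R' - rij in
  InnerState U' r' R'' (R'' == 0).

(* One iteration i of the outer loop: set R'_i := R_i, run the inner loop
   for j = 1..n (exiting as soon as R'_i = 0). *)
Definition outer_step (Rs : 'I_n -> R) (s : alg_state) (i : 'I_n) : alg_state :=
  let t := foldl (inner_step i) (InnerState (st_U s) (st_r s) (Rs i) false)
                 (enum 'I_n) in
  AlgState (in_U t) (in_r t).

Definition init_state (Cu Rs : 'I_n -> R) : alg_state :=
  AlgState (fun i => Cu i - Rs i) (fun _ _ => 0).

(* State after the first k iterations of the outer loop.  Thus, for the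
   0-based index a : 'I_n, [state_after Cu Rs a] is the state at the start
   of (1-based) iteration a+1, and [state_after Cu Rs a.+1] the state at its end. *)
Definition state_after (Cu Rs : 'I_n -> R) (k : nat) : alg_state :=
  foldl (outer_step Rs) (init_state Cu Rs) (take k (enum 'I_n)).

End Algo.

(* Main.v *)
Require Import Defs.
From mathcomp Require Import all_boot all_order all_algebra.
From mathcomp Require Import ring.
Import Order.TTheory GRing.Theory Num.Theory.
Local Open Scope ring_scope.

Section Helpers.
Variables (R : realFieldType) (n : nat).

Lemma fold_done (i : 'I_n) l (s : inner_state R n) :
  in_done s -> foldl (inner_step i) s l = s.
Proof.
elim: l => [|j l IH] //= Hd.
by rewrite /inner_step Hd IH.
Qed.

Lemma fold_other (i a : 'I_n) l (s : inner_state R n) :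
  a != i -> forall b, in_r (foldl (inner_step i) s l) a b = in_r s a b.
Proof.
move=> Hai b; elim: l s => [|j l IH] s //=.
rewrite IH /inner_step; case: (in_done s) => //=.
by rewrite (negbTE Hai).
Qed.

Lemma fold_U (i : 'I_n) l (s : inner_state R n) k :
  k \notin l -> in_U (foldl (inner_step i) s l) k = in_U s k.
Proof.
elim: l s => [|j l IH] s //=.
rewrite in_cons negb_or => /andP [Hkj Hk].
rewrite IH // /inner_step; case: (in_done s) => //=.
by rewrite (negbTE Hkj).
Qed.

Lemma fold_cons (i : 'I_n) l (s : inner_state R n) :
  uniq l -> (forall k, k \in l -> in_r s i k = 0) ->
  \sum_(k < n) in_r (foldl (inner_step i) s l) i k
    + in_R' (foldl (inner_step i) s l)
  = \sum_(k < n) in_r s i k + in_R' s.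
Proof.
elim: l s => [|j l IH] s //= /andP [Hjl Hu] Hz.
rewrite IH //; last first.
  move=> k Hk; rewrite /inner_step; case: (in_done s) => /=.
    by apply: Hz; rewrite in_cons Hk orbT.
  have -> : (k == j) = false by apply/negbTE; apply: contraNneq Hjl => <-.
  by rewrite andbF; apply: Hz; rewrite in_cons Hk orbT.
rewrite /inner_step; case: (in_done s) => //=.
set rij := (if _ then _ else _).
rewrite (bigD1 j) //= (bigD1 j (P := xpredT)) //= eqxx !eqxx /=.
rewrite (eq_bigr (fun k => in_r s i k)); last first.
  by move=> k /negbTE ->.
rewrite Hz ?mem_head //.
by rewrite add0r; ring.
Qed.

Lemma fold_zero (i : 'I_n) (j : 'I_n) l (s : inner_state R n) :
  uniq (j :: l) ->
  (~~ in_done s -> \sum_(k <- j :: l) in_U s k >= nm2 R n * in_R' s) ->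
  (in_done s -> in_R' s = 0) ->
  in_R' (foldl (inner_step i) s (j :: l)) = 0.
Proof.
elim: l j s => [|j' l IH] j s Hu Hinv Hd.
  rewrite /= /inner_step; case Ed: (in_done s) => /=; first by apply: Hd.
  have := Hinv (negbT Ed); rewrite big_cons big_nil addr0 => Hle.
  by case: ltP => H /=; [rewrite ltNge Hle in H | rewrite subrr].
case Ed: (in_done s).
  by rewrite fold_done // Hd.
set s' := inner_step i s j.
have Hs'd : in_done s' -> in_R' s' = 0.
  by rewrite /s' /inner_step Ed /= => /eqP.
case Ec: (nm2 R n * in_R' s > in_U s j); last first.
  change (foldl (inner_step i) s (j :: j' :: l)) with (foldl (inner_step i) s' (j' :: l)).
  have Hdn : in_done s' by rewrite /s' /inner_step Ed /= Ec subrr eqxx.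
  by rewrite fold_done // Hs'd.
change (foldl (inner_step i) s (j :: j' :: l)) with (foldl (inner_step i) s' (j' :: l)).
have /andP [Hj Hu'] := Hu.
move: Hj; rewrite in_cons negb_or => /andP [Hjj' Hjl].
apply: IH => //.
  move=> _.
  have := Hinv (negbT Ed); rewrite big_cons => Hle.
  rewrite /s' /inner_step Ed /= Ec.
  have -> : \sum_(k <- j' :: l) (if k == j then in_U s j - nm2 R n * (in_U s j / nm2 R n) else in_U s k)
     = \sum_(k <- j' :: l) in_U s k.
    rewrite big_cons [in RHS]big_cons; congr (_ + _).
      by rewrite eq_sym (negbTE Hjj').
    apply: eq_big_seq => k Hk; case: eqP => // Ek; subst k.
    by rewrite Hk in Hjl.
  have H2 : in_U s j <= nm2 R n * (in_U s j / nm2 R n).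
    case: (eqVneq (nm2 R n) 0) => E.
      by rewrite E mul0r; move: Ec; rewrite E mul0r => /ltW.
    by rewrite mulrC divfK.
  rewrite mulrBr; move: Hle; set S := \sum_(_ <- _) _.
  move=> Hle; rewrite lerBlDr; apply: le_trans Hle _.
  by rewrite addrC lerD2l.
Qed.

End Helpers.

Lemma row_zero (R : realFieldType) (n : nat) (Cu Rs : 'I_n -> R) l (s : alg_state R n) a :
  a \notin l -> forall b,
  st_r (foldl (outer_step Rs) s l) a b = st_r s a b.
Proof.
move=> Ha b; elim: l s Ha => [|i l IH] s //=.
rewrite in_cons negb_or => /andP [Hai Hl].
rewrite IH //= /outer_step /= fold_other //.
Qed.

Theorem propositionB1 (R : realFieldType) (n : nat) (Cu Rs : 'I_n -> R) :
  (1 <= n)%N ->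
  (forall i, 0 < Cu i) ->
  (forall i, 0 < Rs i) ->
  forall a : 'I_n,
    \sum_(i < n) st_U (state_after Cu Rs a) i >= nm2 R n * Rs a ->
    \sum_(i < n) st_r (state_after Cu Rs a.+1) a i = Rs a.
Proof.
move=> _ _ _ a Hsum.
have Hsz : (a < size (enum 'I_n))%N by rewrite size_enum_ord.
have Hnth : nth a (enum 'I_n) a = a by apply: val_inj; rewrite /= nth_enum_ord.
have Hnot : a \notin take a (enum 'I_n).
  apply/negP => Hin.
  have : val a \in map val (take a (enum 'I_n)) by apply: map_f.
  by rewrite map_take val_enum_ord take_iota mem_iota /= ltnNge geq_minl.
rewrite /state_after (take_nth a Hsz) foldl_rcons Hnth -/(state_after Cu Rs a).
set s0 := state_after Cu Rs a.
have Hz : forall b, st_r s0 a b = 0.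
  by move=> b; rewrite /s0 /state_after row_zero.
rewrite /outer_step /=.
set st := InnerState _ _ _ _.
have := @fold_cons R n a (enum 'I_n) st (enum_uniq _) (fun k _ => Hz k).
case E: (enum 'I_n) => [|j l].
  by move: Hsz; rewrite E.
have H0 : in_R' (foldl (inner_step a) st (j :: l)) = 0.
  apply: fold_zero => //.
  - by rewrite -E enum_uniq.
  - by move=> _; rewrite -E big_enum /=.
rewrite H0 addr0 => ->.
by rewrite /= big1 ?add0r.
Qed.
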